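(* Let $M$ be a closed $3$-manifold obtained by surgery on a framed oriented ordered link $L=L_1\cup\dots\cup L_m$ in an oriented integral homology $3$-sphere $N$, let $G=H_1(M)/\mathrm{Tors}\,H_1(M)$, let $[[t_i]]\in G$ be represented by the meridian of $L_i$, and let $I_0=\{i\mid[[t_i]]=1\}$. Assume that $I_0$ consists of all $i\in\{1,\dots,m\}$ except a certain $n$. Then the framing number of $L_n$ is $0$ and $lk(L_n,L_i)=0$ for all $i\ne n$. Moreover, for sets $I\subset J\subset I_0$, the group $H(L^{\overline I},L^{\overline I\cap J})$ has rank $1$ if and only if $I=J=I_0$.
   Context: $lk$ is the linking number in $N$; $lk(L_i,L_i)$ denotes the framing number. $\overline I=\{1,\dots,m\}\setminus I$, $L^K=\bigcup_{i\in K}L_i$. For a link $L'$ with components indexed by a set $K$ and a subset $K'\subsetneq K$, $H(L',L'^{K'})$ is the abelian group generated by $t_i$, $i\in K$, subject to the relations $\prod_{j\in K,j\ne i}(t_jt_i^{-1})^{lk(L_i,L_j)}=1$ for $i\in K'$. *)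

(* Defs.v *)
(* A surgery presentation of M on the framed link L in an
   integral homology sphere N is encoded by its linking matrix
   A : 'M[int]_m, A i j = lk(L_i,L_j) (i <> j), A i i = framing of L_i. *)
From HB Require Import structures.
From mathcomp Require Import all_boot all_order all_algebra.
Set Implicit Arguments. Unset Strict Implicit. Unset Printing Implicit Defensive.
Import Order.TTheory GRing.Theory Num.Theory.
Local Open Scope ring_scope.

(* H_1(M) = Z^m / (row space of A); generator e_i = meridian t_i.
   [[t_i]] = 1 in G = H_1(M)/Tors  iff  some nonzero multiple of e_i is a
   relation. *)
Definition trivial_class (m : nat) (A : 'M[int]_m) (i : 'I_m) : Prop :=
  exists k : int, k != 0 /\
    exists v : 'rV[int]_m, k *: (delta_mx 0 i : 'rV[int]_m) = v *m A.

Definition is_I0 (m : nat) (A : 'M[int]_m) (S : {set 'I_m}) : Prop :=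
  forall i, i \in S <-> trivial_class A i.

(* H(L', L'^{K'}) for the sublink L' = L^K: generators t_j (j in K), written
   additively as the vectors e_j supported on K; relation for i in K':
   sum_{j in K, j<>i} lk(L_i,L_j) (e_j - e_i). *)
Definition relvec (m : nat) (A : 'M[int]_m) (K : {set 'I_m}) (i : 'I_m)
  : 'rV[int]_m :=
  \row_j (if (j \in K) && (j != i) then A i j
          else if j == i then - \sum_(k in K | k != i) A i k else 0).

Definition in_rel (m : nat) (A : 'M[int]_m) (K K' : {set 'I_m})
  (v : 'rV[int]_m) : Prop :=
  exists w : 'I_m -> int, v = \sum_(i in K') w i *: relvec A K i.

Definition supported_on (m : nat) (K : {set 'I_m}) (v : 'rV[int]_m) : Prop :=
  forall j, j \notin K -> v 0 j = 0.

Definition indep_mod (m : nat) (A : 'M[int]_m) (K K' : {set 'I_m}) (d : nat)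
  (vs : 'I_d -> 'rV[int]_m) : Prop :=
  (forall k, supported_on K (vs k)) /\
  forall c : 'I_d -> int, in_rel A K K' (\sum_k c k *: vs k) ->
    forall k, c k = 0.

Definition H_rank (m : nat) (A : 'M[int]_m) (K K' : {set 'I_m}) (r : nat)
  : Prop :=
  (exists vs : 'I_r -> 'rV[int]_m, indep_mod A K K' vs) /\
  (forall vs : 'I_r.+1 -> 'rV[int]_m, ~ indep_mod A K K' vs).

(* Main.v *)
Require Import Defs.
From HB Require Import structures.
From mathcomp Require Import all_boot all_order all_algebra.
Import Order.TTheory GRing.Theory Num.Theory.
Local Open Scope ring_scope.

Lemma l10_lift_neq : (lift ord0 (ord0 : 'I_1) == ord0 :> 'I_2) = false.
Proof. by []. Qed.

Lemma l10_common (m : nat) (A : 'M[int]_m) (s : seq 'I_m) :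
  (forall i, i \in s -> trivial_class A i) ->
  exists K : int, K != 0 /\ exists w : 'I_m -> 'rV[int]_m,
    forall i, i \in s -> K *: (delta_mx 0 i : 'rV[int]_m) = w i *m A.
Proof.
elim: s => [|x s IH] H.
  by exists 1; split => //; exists (fun _ => 0) => i; rewrite in_nil.
have [K [K0 [w Hw]]] := IH (fun i hi => H i ltac:(by rewrite inE hi orbT)).
have [k [k0 [v Hv]]] := H x (mem_head x s).
exists (K * k); split; first by rewrite mulf_neq0.
exists (fun i => if i == x then K *: v else k *: w i) => i; rewrite inE.
case: eqP => [-> _|_ /= hi].
  by rewrite -scalerA Hv scalemxAl.
by rewrite mulrC -scalerA Hw // scalemxAl.
Qed.

Lemma l10_relvec_sum (m : nat) (A : 'M[int]_m) (K : {set 'I_m}) (i : 'I_m) :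
  \sum_j relvec A K i 0 j = 0.
Proof.
under eq_bigr do rewrite mxE.
rewrite (bigD1 i) //= eqxx andbF.
rewrite [X in _ + X](eq_bigr (fun j => if j \in K then A i j else 0)); last first.
  by move=> j hj; rewrite hj andbT (negbTE hj).
rewrite -big_mkcondr.
under eq_bigl do rewrite andbC.
exact: addNr.
Qed.

Lemma l10_in_rel (m : nat) (A : 'M[int]_m) (K K' : {set 'I_m}) (n : 'I_m)
  (v : 'rV[int]_m) :
  (forall i, i \in K' -> A i n = 0 /\ i != n) -> in_rel A K K' v ->
  v 0 n = 0 /\ \sum_j v 0 j = 0.
Proof.
move=> HK [w ->]; split.
  rewrite summxE big1 // => i hi; rewrite !mxE.
  have [-> ni] := HK i hi.
  by rewrite [n == i]eq_sym (negbTE ni) andbT; case: (n \in K); rewrite mulr0.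
under eq_bigr do rewrite summxE.
rewrite exchange_big big1 // => i _.
under eq_bigr do rewrite mxE.
by rewrite -mulr_sumr l10_relvec_sum mulr0.
Qed.

Lemma l10_sum_comb (m d : nat) (c : 'I_d -> int) (vs : 'I_d -> 'rV[int]_m) :
  \sum_j (\sum_k c k *: vs k) 0 j = \sum_k c k * \sum_j vs k 0 j.
Proof.
under eq_bigr do rewrite summxE.
rewrite exchange_big; apply: eq_bigr => k _.
by rewrite mulr_sumr; apply: eq_bigr => j _; rewrite mxE.
Qed.

Lemma l10_sum_delta (m : nat) (x : 'I_m) :
  \sum_j (delta_mx 0 x : 'rV[int]_m) 0 j = 1.
Proof.
rewrite (bigD1 x) //= mxE !eqxx big1 ?addr0 // => j hj.
by rewrite mxE (negbTE hj) andbF.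
Qed.

Theorem lemma10p3 (m : nat) (A : 'M[int]_m) (n : 'I_m) (I0 : {set 'I_m})
  (Asym : A^T = A)
  (hI0 : is_I0 A I0) (hI0n : I0 = [set~ n]) :
  A n n = 0 /\ (forall i : 'I_m, i != n -> A n i = 0) /\
  (forall I J : {set 'I_m}, I \subset J -> J \subset I0 ->
     (H_rank A (~: I) (~: I :&: J) 1 <-> (I = I0 /\ J = I0))).
Proof.
have Hcol : forall j, A j n = 0.
  move=> j; apply/eqP; apply/negPn/negP => Hjn.
  have Hn : ~ trivial_class A n.
    by move=> /(proj2 (hI0 n)); rewrite hI0n !inE eqxx.
  have [K [K0 [w Hw]]] := @l10_common m A (enum [set~ n])
     (fun i hi => proj1 (hI0 i) ltac:(by move: hi; rewrite mem_enum hI0n)).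
  apply: Hn; exists (K * A j n); split; first by rewrite mulf_neq0.
  exists (K *: delta_mx 0 j - \sum_(l | l != n) A j l *: w l).
  rewrite mulmxBl mulmx_suml -scalemxAl.
  under eq_bigr => l hl do rewrite -scalemxAl -Hw ?mem_enum ?inE //.
  apply/rowP => l; rewrite !mxE summxE.
  under eq_bigr do rewrite !mxE.
  have -> : \sum_(k < m) ((0 == 0 :> 'I_1) && (k == j))%:R * A k l = A j l.
    rewrite (bigD1 j) //= eqxx mul1r big1 ?addr0 // => k hk.
    by rewrite (negbTE hk) mul0r.
  case: (eqVneq l n) => [->|ln].
    rewrite eqxx mulr1 big1 ?subr0 // => i hi.
    by rewrite !mxE [n == i]eq_sym (negbTE hi) andbF !mulr0.
  rewrite andbF mulr0 (bigD1 l) //= !mxE !eqxx big1 ?addr0.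
    by rewrite mulr1 mulrC subrr.
  by move=> i /andP [_ hi]; rewrite !mxE [l == i]eq_sym (negbTE hi) andbF !mulr0.
have Hrow : forall i, A n i = 0.
  by move=> i; have := congr1 (fun M : 'M[int]_m => M i n) Asym; rewrite mxE => ->.
split; first exact: Hrow.
split; first by move=> i _; exact: Hrow.
move=> I J hIJ hJI0; split.
- move=> [_ Hno].
  have hII0 : I \subset I0 := subset_trans hIJ hJI0.
  case: (eqVneq I I0) => [EI|NI].
    split => //; apply/eqP; rewrite eqEsubset hJI0 -EI hIJ //.
  have : ~~ (I0 \subset I) by apply: contra NI => h; rewrite eqEsubset hII0 h.
  case/subsetPn => p pI0 pI.
  have nI : n \notin I.
    by apply/negP => /(subsetP hII0); rewrite hI0n !inE eqxx.
  have pn : p != n by move: pI0; rewrite hI0n !inE.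
  exfalso; apply: (Hno (fun k => delta_mx 0 (if k == ord0 then n else p))).
  split.
    move=> k j hj; rewrite mxE eqxx /=; case: ifP => _; case: eqP => // E;
      by move: hj; rewrite E inE ?nI ?pI.
  move=> c hrel.
  have HK : forall i, i \in ~: I :&: J -> A i n = 0 /\ i != n.
    move=> i; rewrite inE => /andP [_ /(subsetP hJI0)]; rewrite hI0n !inE.
    by move=> ->; rewrite Hcol.
  have [h1 h2] := @l10_in_rel _ A _ _ n _ HK hrel.
  rewrite l10_sum_comb !big_ord_recl big_ord0 /= !l10_sum_delta in h2.
  rewrite summxE !big_ord_recl big_ord0 /= !mxE ?l10_lift_neq eqxx /= in h1.
  rewrite eq_sym (negbTE pn) /= in h1.
  have E0 : c ord0 = 0 by move: h1; rewrite eqxx mulr1 mulr0 !addr0.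
  have E1 : c (lift ord0 ord0) = 0 by move: h2; rewrite E0 !mulr1 add0r addr0.
  move=> k; case: (unliftP ord0 k) => [j ->|->] //.
  by rewrite ord1.
- case=> -> ->; rewrite hI0n setCK setICr; split.
    exists (fun _ => delta_mx 0 n); split.
      by move=> k j; rewrite inE mxE => /negbTE ->; rewrite andbF.
    move=> c [w]; rewrite big_set0 big_ord1 => /rowP /(_ n).
    rewrite !mxE !eqxx mulr1 => E k; by rewrite ord1.
  move=> vs [Hs Hind].
  have Hrel0 : forall v : 'rV[int]_m, v = 0 -> in_rel A [set n] set0 v.
    by move=> v ->; exists (fun _ => 0); rewrite big_set0.
  have E := Hind (fun k => if k == ord0 then vs (lift ord0 ord0) 0 n
                            else - vs ord0 0 n).
  have E1 : vs ord0 0 n = 0.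
    apply/eqP; rewrite -oppr_eq0; apply/eqP.
    have := E _ (lift ord0 ord0); rewrite l10_lift_neq; apply.
    apply: Hrel0; apply/rowP => j.
    rewrite summxE !big_ord_recl big_ord0 /= !mxE ?l10_lift_neq ?eqxx.
    case: (eqVneq j n) => [->|jn].
      by rewrite mulNr addr0 mulrC addrN.
    have Hj : j \notin [set n] by rewrite inE.
    by rewrite (Hs _ _ Hj) (Hs _ _ Hj) !mulr0 addr0.
  have := Hind (fun k => if k == ord0 then 1 else 0) _ ord0.
  rewrite eqxx => H; have : (1 : int) = 0; last by [].
  apply: H; apply: Hrel0; apply/rowP => j.
  rewrite summxE !big_ord_recl big_ord0 /= !mxE ?l10_lift_neq ?eqxx.
  case: (eqVneq j n) => [->|jn].
    by rewrite E1 !mul1r mul0r !addr0.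
  have Hj : j \notin [set n] by rewrite inE.
  by rewrite (Hs _ _ Hj) (Hs _ _ Hj) !mulr0 addr0.
Qed.
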